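(* Let $\mathscr{X}$ be a complex Banach space and $\mathcal{A}\subseteq\mathcal{B}(\mathscr{X})$ a reflexive algebra with commutant $\mathcal{A}'$. Then $\mathrm{Grp}(\mathcal{A})\mathrm{Grp}(\mathcal{A}')\subseteq\mathrm{Col}(\mathcal{A})\subseteq\mathrm{Col}(\mathcal{A}')$. Moreover, if both $\mathcal{A}$ and $\mathcal{A}'$ are reflexive, then $\mathrm{Grp}(\mathcal{A})\mathrm{Grp}(\mathcal{A}')$ is a normal subgroup of $\mathrm{Col}(\mathcal{A})$.
   Context: $\mathcal{A}'=\{T\in\mathcal{B}(\mathscr{X}):TA=AT\ \forall A\in\mathcal{A}\}$. A subalgebra $\mathcal{A}$ is reflexive if $\mathrm{Alg}\,\mathrm{Lat}(\mathcal{A})=\mathcal{A}$, where $\mathrm{Lat}(\mathcal{T})$ is the set of closed subspaces invariant under all operators of $\mathcal{T}$ and $\mathrm{Alg}(\mathfrak{F})$ is the set of operators leaving every subspace of $\mathfrak{F}$ invariant. For a unital algebra $\mathcal{B}$, $\mathrm{Grp}(\mathcal{B})$ is the group of invertible $S\in\mathcal{B}$ with $S^{-1}\in\mathcal{B}$, and $\mathrm{Grp}(\mathcal{A})\mathrm{Grp}(\mathcal{A}')=\{AB:A\in\mathrm{Grp}(\mathcal{A}),B\in\mathrm{Grp}(\mathcal{A}')\}$. For a set $\mathcal{T}$ of operators, $\mathrm{Col}(\mathcal{T})$ is the group of invertible $S\in\mathcal{B}(\mathscr{X})$ such that for every closed subspace $\mathscr{M}$: $\mathscr{M}\in\mathrm{Lat}(\mathcal{T})$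 iff $S\mathscr{M}\in\mathrm{Lat}(\mathcal{T})$. *)

(* Defs.v *)
(* Complex scalars: R[i] = complex R for R : realType
   (real_closed's complex numbers, a numFieldType whose norm is the modulus).
   A complex Banach space is a completeNormedModType R[i]. *)
From mathcomp Require Import all_boot all_algebra all_classical all_reals all_analysis.
From mathcomp Require Import complex.
Import numFieldNormedType.Exports.
Set Implicit Arguments. Unset Strict Implicit. Unset Printing Implicit Defensive.
Local Open Scope classical_set_scope.
Local Open Scope ring_scope.

Section Defs.
Variables (R : realType) (X : completeNormedModType R[i]).

(* bounded (= continuous) linear operators on X : the set B(X) *)
Definition bop (T : X -> X) : Prop :=
  (forall (a : R[i]) (x y : X), T (a *: x + y) = a *: T x + T y) /\ continuous T.

Definition closed_subspace (M : set X) : Prop :=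
  M 0 /\ (forall (a : R[i]) (x y : X), M x -> M y -> M (a *: x + y)) /\ closed M.

Definition invariant (T : X -> X) (M : set X) : Prop :=
  forall x, M x -> M (T x).

Definition Lat (TT : set (X -> X)) : set (set X) :=
  [set M | closed_subspace M /\ forall T, TT T -> invariant T M].

Definition Alg (F : set (set X)) : set (X -> X) :=
  [set T | bop T /\ forall M, F M -> invariant T M].

Definition commutant (A : set (X -> X)) : set (X -> X) :=
  [set T | bop T /\ forall S, A S -> T \o S = S \o T].

Definition subalgebra (A : set (X -> X)) : Prop :=
  A `<=` bop /\ A (fun _ => 0) /\
  (forall (a : R[i]) S T, A S -> A T -> A (fun x => a *: S x + T x)) /\
  (forall S T, A S -> A T -> A (S \o T)).

Definition reflexive_alg (A : set (X -> X)) : Prop := Alg (Lat A) = A.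

Definition Grp (B : set (X -> X)) : set (X -> X) :=
  [set S | B S /\ exists S', B S' /\ S \o S' = id /\ S' \o S = id].

Definition GrpProd (A : set (X -> X)) : set (X -> X) :=
  [set S | exists U V, Grp A U /\ Grp (commutant A) V /\ S = U \o V].

Definition Col (TT : set (X -> X)) : set (X -> X) :=
  [set S | Grp bop S /\
     forall M, closed_subspace M -> (Lat TT M <-> Lat TT (S @` M))].

Definition normal_subgroup (N G : set (X -> X)) : Prop :=
  N `<=` G /\ N id /\
  (forall S T, N S -> N T -> N (S \o T)) /\
  (forall S S', N S -> S \o S' = id -> S' \o S = id -> N S') /\
  (forall S S' T, G S -> S \o S' = id -> S' \o S = id -> N T -> N (S \o T \o S')).

End Defs.

(* Main.v *)
Require Import Defs.
From mathcomp Require Import all_boot all_algebra all_classical all_reals all_analysis.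
From mathcomp Require Import complex.
Import numFieldNormedType.Exports.
Local Open Scope classical_set_scope.
Local Open Scope ring_scope.

Import GRing.Theory Num.Theory.
Set Implicit Arguments. Unset Strict Implicit.
Section Aux.
Variables (R : realType) (X : completeNormedModType R[i]).
Implicit Types (S T U V W : X -> X) (M : set X) (A : set (X -> X)).

Lemma ptw S T (H : S = T) x : S x = T x.
Proof. by rewrite H. Qed.

Lemma ptwc S S' (H : S \o S' = id) x : S (S' x) = x.
Proof. exact: (ptw H x). Qed.

Lemma ptwC S T (H : S \o T = T \o S) x : S (T x) = T (S x).
Proof. exact: (ptw H x). Qed.

Lemma inv_uniq S S' S'' : S \o S' = id -> S'' \o S = id -> S'' = S'.
Proof.
move=> H1 H2; apply: funext => x.
have := ptw H2 (S' x); rewrite /= => <-.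
by have := ptw H1 x; rewrite /= => ->.
Qed.

Lemma bop_comp S T : bop S -> bop T -> bop (S \o T).
Proof.
move=> [lS cS] [lT cT]; split.
  by move=> a x y /=; rewrite lT lS.
by move=> x; apply: continuous_comp; [exact: cT | exact: cS].
Qed.

Lemma bop_id : bop (@id X).
Proof. by split=> // x; exact: cvg_id. Qed.

Lemma bop0 S : bop S -> S 0 = 0.
Proof.
move=> [lS _]; have := lS 1 0 0; rewrite !scale1r addr0 => H.
have : S 0 + S 0 = S 0 + 0 by rewrite addr0 -H.
by move/addrI.
Qed.

Lemma image_inv S S' M : S \o S' = id -> S' \o S = id ->
  S @` M = S' @^-1` M.
Proof.
move=> H1 H2; apply/seteqP; split => x.
  by move=> [y My <-]; rewrite /preimage /= (ptwc H2 y).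
move=> Mx; exists (S' x) => //; exact: (ptwc H1 x).
Qed.

Lemma image_cancel S S' M : S' \o S = id -> S' @` (S @` M) = M.
Proof.
move=> H; rewrite image_comp H; apply/seteqP; split => x.
  by move=> [y My <-].
by move=> Mx; exists x.
Qed.

Lemma cs_image S S' M : bop S -> bop S' -> S \o S' = id -> S' \o S = id ->
  closed_subspace M -> closed_subspace (S @` M).
Proof.
move=> bS [_ cS'] H1 H2 [M0 [Ml Mc]]; split; last split.
- by exists 0 => //; exact: bop0.
- move=> a x y [x' Mx' <-] [y' My' <-]; exists (a *: x' + y'); first exact: Ml.
  by case: bS => lS _; rewrite lS.
- rewrite (image_inv M H1 H2); apply: preimage_closed => // x _; exact: cS'.
Qed.

Lemma grpA_fix A U U' M : A U -> A U' -> U \o U' = id -> Lat A M -> U @` M = M.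
Proof.
move=> AU AU' H [_ inv]; apply/seteqP; split => x.
  by move=> [y My <-]; exact: (inv U AU).
move=> Mx; exists (U' x); first exact: (inv U' AU').
exact: (ptwc H x).
Qed.

Lemma grpA'_lat A V V' M : commutant A V -> bop V' -> V \o V' = id -> V' \o V = id ->
  Lat A M -> Lat A (V @` M).
Proof.
move=> [bV cV] bV' H1 H2 [csM inv]; split.
  exact: (cs_image bV bV' H1 H2 csM).
move=> T AT _ [y My <-]; exists (T y); first exact: (inv T AT).
exact: (ptwC (cV T AT) y).
Qed.

Lemma col_inv A S S' : Col A S -> S \o S' = id -> S' \o S = id -> Col A S'.
Proof.
move=> [[bS [S'' [bS'' [H1' H2']]]] cS] H1 H2.
have E : S'' = S' by apply: (inv_uniq H1 H2').
subst S''.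
split; first by split => //; exists S.
move=> M csM.
have cs' := cs_image bS'' bS H2 H1 csM.
have := cS _ cs'; rewrite image_cancel //.
by move=> [h1 h2]; split.
Qed.

Lemma col_bop A S : Col A S -> bop S.
Proof. by move=> [[]]. Qed.

Lemma col_bop_inv A S S' : Col A S -> S \o S' = id -> S' \o S = id -> bop S'.
Proof. by move=> cS H1 H2; have [[]] := col_inv cS H1 H2. Qed.

Lemma conjA A S S' T : subalgebra A -> reflexive_alg A ->
  Col A S -> S \o S' = id -> S' \o S = id -> A T -> A (S' \o T \o S).
Proof.
move=> [sub _] HA cS H1 H2 AT.
rewrite -HA; split.
  apply: bop_comp; last exact: col_bop cS.
  apply: bop_comp; first exact: (col_bop_inv cS H1 H2).
  exact: sub.
move=> M LM x Mx.
have LSM : Lat A (S @` M) by case: cS => _ h; apply: (proj1 (h M LM.1)).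

have : (S @` M) (T (S x)) by case: LSM => _ h; apply: (h T AT); exists x.
move=> [y My Ey] /=; rewrite -Ey; by rewrite (ptwc H2 y).
Qed.

Lemma conjA' A S S' W : subalgebra A -> reflexive_alg A ->
  Col A S -> S \o S' = id -> S' \o S = id -> commutant A W ->
  commutant A (S' \o W \o S).
Proof.
move=> sA HA cS H1 H2 [bW cW]; split.
  apply: bop_comp; last exact: col_bop cS.
  apply: bop_comp => //; exact: (col_bop_inv cS H1 H2).
move=> T AT; apply: funext => x /=.
have AT2 : A (S \o T \o S') by apply: (conjA sA HA (col_inv cS H1 H2) H2 H1 AT).
have E : S (T x) = (S \o T \o S') (S x) by rewrite /= (ptwc H2 x).
rewrite E (ptwC (cW _ AT2) (S x)) /=.
by rewrite (ptwc H2).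
Qed.

End Aux.

Theorem theorem3p10 (R : realType) (X : completeNormedModType R[i])
    (A : set (X -> X)) :
  subalgebra A -> reflexive_alg A ->
  (GrpProd A `<=` Col A /\ Col A `<=` Col (commutant A)) /\
  (reflexive_alg (commutant A) -> normal_subgroup (GrpProd A) (Col A)).
Proof.
move=> sA HA.
have [subA [_ [_ compA]]] := sA.
have p1 : GrpProd A `<=` Col A.
  move=> S [U [V [[AU [U' [AU' [HU1 HU2]]]] [[cV [V' [cV' [HV1 HV2]]]] ->]]]].
  have bV := cV.1; have bV' := cV'.1.
  split.
    split; first by apply: bop_comp => //; exact: subA.
    exists (V' \o U'); split; first by apply: bop_comp => //; exact: subA.
    split; apply: funext => x /=.
      by rewrite (ptwc HV1) (ptwc HU1).
    by rewrite (ptwc HU2) (ptwc HV2).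
  move=> M csM; rewrite -image_comp; split.
    move=> LM.
    have LVM := grpA'_lat cV bV' HV1 HV2 LM.
    by rewrite (grpA_fix AU AU' HU1 LVM).
  move=> LSM.
  have E : U' @` (U @` (V @` M)) = U @` (V @` M) by apply: (grpA_fix AU' AU HU2 LSM).
  have := grpA'_lat cV' bV HV2 HV1 LSM.
  rewrite -E (image_cancel (V @` M) HU2) (image_cancel M HV2).
  by [].
split.
  split => //.
  move=> S cS; have [[bS [S' [bS' [H1 H2]]]] colS] := cS.
  split; first by split => //; exists S'.
  move=> M csM; split.
    move=> [_ inv]; split; first exact: (cs_image bS bS' H1 H2 csM).
    move=> W cW _ [x Mx <-]; exists ((S' \o W \o S) x).
      exact: (inv _ (conjA' sA HA cS H1 H2 cW)).
    by rewrite /= (ptwc H1).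
  move=> [_ inv]; split => // W cW x Mx.
  have cW2 := conjA' sA HA (col_inv cS H1 H2) H2 H1 cW.
  have : (S @` M) ((S \o W \o S') (S x)) by apply: inv => //; exists x.
  move=> [y My]; rewrite /= (ptwc H2 x) => Ey.
  have := congr1 S' Ey; rewrite (ptwc H2 y) (ptwc H2) => <-; exact: My.
move=> _.
have Aid : A id.
  rewrite -HA; split; first exact: bop_id.
  by move=> M _ x.
have cid : commutant A id by split; first exact: bop_id.
split; first exact: p1.
split.
  exists id, id; split; first by split => //; exists id.
  by split => //; split => //; exists id.
split.
  move=> S T [U1 [V1 [[AU1 [U1' [AU1' [HU11 HU12]]]] [[cV1 [V1' [cV1' [HV11 HV12]]]] ->]]]].
  move=> [U2 [V2 [[AU2 [U2' [AU2' [HU21 HU22]]]] [[cV2 [V2' [cV2' [HV21 HV22]]]] ->]]]].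
  exists (U1 \o U2), (V1 \o V2); split.
    split; first exact: compA.
    exists (U2' \o U1'); split; first exact: compA.
    split; apply: funext => x /=.
      by rewrite (ptwc HU21) (ptwc HU11).
    by rewrite (ptwc HU12) (ptwc HU22).
  split.
    have ccomp : forall W1 W2, commutant A W1 -> commutant A W2 -> commutant A (W1 \o W2).
      move=> W1 W2 [b1 c1] [b2 c2]; split; first exact: bop_comp.
      move=> T0 AT0; apply: funext => x /=.
      by rewrite (ptwC (c2 _ AT0)) /= (ptwC (c1 _ AT0)).
    split; first exact: ccomp.
    exists (V2' \o V1'); split; first exact: ccomp.
    split; apply: funext => x /=.
      by rewrite (ptwc HV21) (ptwc HV11).
    by rewrite (ptwc HV12) (ptwc HV22).
  apply: funext => x /=.
  by rewrite (ptwC (cV1.2 _ AU2)).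
split.
  move=> S S' [U [V [[AU [U' [AU' [HU1 HU2]]]] [[cV [V' [cV' [HV1 HV2]]]] ES]]]] H1 H2.
  exists U', V'; split; first by split => //; exists U.
  split; first by split => //; exists V.
  apply: esym; apply: (inv_uniq H1); rewrite ES; apply: funext => x /=.
  by rewrite (ptwC (cV'.2 _ AU)) /= (ptwc HU2) (ptwc HV2).
move=> S S' T cS H1 H2 [U [V [[AU [U' [AU' [HU1 HU2]]]] [[cV [V' [cV' [HV1 HV2]]]] ->]]]].
have cS' := col_inv cS H1 H2.
exists (S \o U \o S'), (S \o V \o S'); split.
  split; first exact: (conjA sA HA cS' H2 H1 AU).
  exists (S \o U' \o S'); split; first exact: (conjA sA HA cS' H2 H1 AU').
  split; apply: funext => x /=.
    by rewrite (ptwc H2) (ptwc HU1) (ptwc H1).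
  by rewrite (ptwc H2) (ptwc HU2) (ptwc H1).
split.
  split; first exact: (conjA' sA HA cS' H2 H1 cV).
  exists (S \o V' \o S'); split; first exact: (conjA' sA HA cS' H2 H1 cV').
  split; apply: funext => x /=.
    by rewrite (ptwc H2) (ptwc HV1) (ptwc H1).
  by rewrite (ptwc H2) (ptwc HV2) (ptwc H1).
apply: funext => x /=.
by rewrite (ptwc H2).
Qed.
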